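(* The On-CT-RSD mechanism is universally friendship-truthful on every instance with $\phi_{\min}>1$ whose friendship graph $(N,F^* )$ has maximum degree $1$.
   Context: Instance: agents $N$, $n=|N|$ plots $\mathcal V$, undirected plot graph $(\mathcal V,\mathcal E)$, valuations $u_i:\mathcal V\to[0,1]\cap\mathbb Q$, reciprocal directed friendship relation $F$ with weights $\phi_{i,j}\in\mathbb Q_{\ge0}$; $F^*=\{\{i,j\}:(i,j)\in F\}$; $\phi_{\min}=\min_{(i,j)\in F}\phi_{i,j}$. For an allocation (bijection) $A:N\to\mathcal V$, $U_i(A)=u_i(A(i))+\sum_{(i,j)\in F}\phi_{i,j}\mathbb I(\{A(i),A(j)\}\in\mathcal E)$. On-CT-RSD: repeatedly a uniformly random agent among those who have not yet picked is selected; she picks an available plot and may declare another not-yet-picked agent as her friend, in which case that agent picks an available plot next (without declaring a friend); this continues until all agents have plots. A randomized mechanism is universally friendship-truthful if, for every choice of its random bits (even if known to the agents), no agent can increase her utility by misreporting friendship information, regardless of what other agents report and which plots they pick. *)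

(* Defs.v *)
From mathcomp Require Import all_boot all_order all_algebra.
Set Implicit Arguments. Unset Strict Implicit. Unset Printing Implicit Defensive.
Import Order.TTheory GRing.Theory Num.Theory.
Local Open Scope ring_scope.

(* An event of a run: (agent who picked, plot she picked, friend she declared
   -- None if she declared nobody or picked as a declared friend). *)
Definition event (N V : finType) := (N * V * option N)%type.
Definition hist (N V : finType) := seq (event N V).

Definition agents_of (N V : finType) (h : hist N V) : seq N := [seq e.1.1 | e <- h].
Definition plots_of (N V : finType) (h : hist N V) : seq V := [seq e.1.2 | e <- h].
Definition remaining (N V : finType) (h : hist N V) : {set N} :=
  [set a | a \notin agents_of h].

(* One step of On-CT-RSD.
   c k R  : the k-th random draw, selecting an agent of the set R of agents
            that have not picked yet (the fixed random bits);
   pick a h : plot that agent a picks when the history so far is h;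
   decl a h p : friend agent a declares after picking p at history h. *)
Definition ct_step (N V : finType) (c : nat -> {set N} -> N)
  (pick : N -> hist N V -> V) (decl : N -> hist N V -> V -> option N)
  (st : hist N V * option N * nat) : hist N V * option N * nat :=
  let: (h, pend, k) := st in
  let R := remaining h in
  if R == set0 then st else
  match pend with
  | Some a => (rcons h (a, pick a h, None), None, k)
  | None =>
      let a := c k R in
      let p := pick a h in
      let d := match decl a h p with
               | Some b => if (b \in R) && (b != a) then Some b else None
               | None => None
               end in
      (rcons h (a, p, d), d, k.+1)
  end.

(* The complete history of a run (every step places one agent). *)
Definition on_ct_rsd (N V : finType) (c : nat -> {set N} -> N)
  (pick : N -> hist N V -> V) (decl : N -> hist N V -> V -> option N) : hist N V :=
  (iter #|N| (ct_step c pick decl) ([::], None, 0%N)).1.1.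

Definition alloc_of (N V : finType) (h : hist N V) (a : N) : option V :=
  ohead [seq e.1.2 | e <- h & e.1.1 == a].

Definition U (N V : finType) (u : N -> V -> rat) (F : rel N) (phi : N -> N -> rat)
  (E : rel V) (A : N -> option V) (i : N) : rat :=
  match A i with
  | Some p => u i p + \sum_(j | F i j) phi i j *
                        (match A j with Some q => (E p q)%:R | None => 0 end)
  | None => 0
  end.

Definition myopic (N V : finType) (u : N -> V -> rat) (F : rel N) (phi : N -> N -> rat)
  (E : rel V) (a : N) (h : hist N V) (p : V) : rat :=
  u a p + \sum_(e <- h | F a e.1.1) phi a e.1.1 * (E p e.1.2)%:R.

Definition truthful_decl (N V : finType) (F : rel N) (i : N) (h : hist N V) (p : V)
  : option N := [pick j | F i j && (j \notin agents_of h)].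

(* Main.v *)
Require Import Defs.
From mathcomp Require Import all_boot all_order all_algebra.
From mathcomp Require Import zify ring lra.
Import Order.TTheory GRing.Theory Num.Theory.
Set Implicit Arguments. Unset Strict Implicit.

Section Run.
Variables (N V : finType) (c : nat -> {set N} -> N) (pick : N -> hist N V -> V).
Hypothesis hNV : #|V| = #|N|.
Hypothesis hc : forall k S, S != set0 -> c k S \in S.
Hypothesis hpick : forall a h p, p \notin plots_of h -> pick a h \notin plots_of h.

Definition inv (st : hist N V * option N * nat) :=
  [&& uniq (agents_of st.1.1), uniq (plots_of st.1.1) &
      if st.1.2 is Some b then b \notin agents_of st.1.1 else true].

Lemma fresh_pick a (h : hist N V) : uniq (agents_of h) -> uniq (plots_of h) ->
  remaining h != set0 -> pick a h \notin plots_of h.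
Proof.
move=> ua up /set0Pn [b]; rewrite inE => hb.
have s1 : (size (agents_of h)).+1 <= #|N|.
  rewrite cardE -[(size _).+1]/(size (b :: agents_of h)).
  apply: uniq_leq_size; first by rewrite /= hb ua.
  by move=> x _; rewrite mem_enum.
case: (boolP [forall p : V, p \in plots_of h]) => [/forallP hall|].
  have : #|V| <= size (plots_of h).
    rewrite cardE; apply: uniq_leq_size; first exact: enum_uniq.
    by move=> x _; exact: hall.
  by rewrite hNV /plots_of size_map -(size_map (fun e => e.1.1) h) -/(agents_of h); lia.
by rewrite negb_forall => /existsP [p hp]; apply: hpick hp.
Qed.

Lemma inv_step D st : inv st -> inv (ct_step c pick D st).
Proof.
case: st => [[h pend] k]; rewrite /inv /= => /and3P [ua up hp].
case: ifP => [_|R0]; first by rewrite /= ua up hp.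
have fp : forall a, pick a h \notin plots_of h by move=> a; apply: fresh_pick => //; rewrite R0.
case: pend hp => [a|] hp /=.
  by rewrite /agents_of /plots_of !map_rcons !rcons_uniq /= hp ua fp up.
have ca : c k (remaining h) \in remaining h by apply: hc; rewrite R0.
move: (ca); rewrite inE => ca'.
rewrite /agents_of /plots_of !map_rcons !rcons_uniq /= -/(agents_of h) -/(plots_of h) ca' ua fp up /=.
case: (D _ h _) => [b|] //; case: ifP => // /andP [hb hab] /=.
rewrite mem_rcons inE negb_or hab andTb; by move: hb; rewrite inE.
Qed.

Lemma inv_iter D n st : inv st -> inv (iter n (ct_step c pick D) st).
Proof. by move=> h; elim: n => //= n IH; apply: inv_step. Qed.

Lemma step_prefix D st : exists r, (ct_step c pick D st).1.1 = st.1.1 ++ r.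
Proof.
case: st => [[h pend] k] /=; case: ifP => _; first by exists [::]; rewrite cats0.
case: pend => [a|] /=; by eexists; rewrite -cats1.
Qed.

Lemma iter_prefix D n st : exists r, (iter n (ct_step c pick D) st).1.1 = st.1.1 ++ r.
Proof.
elim: n st => [|n IH] st; first by exists [::]; rewrite cats0.
rewrite iterSr; have [r1 ->] := IH (ct_step c pick D st).
have [r2 ->] := step_prefix D st; exists (r2 ++ r1); by rewrite catA.
Qed.

Lemma iter_size D n st : st = ([::], None, 0%N) ->
  remaining (iter n (ct_step c pick D) st).1.1 != set0 ->
  size (iter n (ct_step c pick D) st).1.1 = n.
Proof.
move=> ->; elim: n => [|n IH] //=.
move: IH; case: (iter n _ _) => [[h pend] k] /= IH.
case: ifP => [/eqP -> /=|R0]; first by rewrite eqxx.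
by case: pend => [a|] /= _; rewrite size_rcons IH // R0.
Qed.

End Run.

Lemma iter_split (T : Type) (s1 s2 : T -> T) (P : T -> bool) :
  (forall z, ~~ P z -> s1 z = s2 z) ->
  forall n x, iter n s1 x = iter n s2 x \/
    exists t m, n = (m + t.+1)%N /\ iter t s1 x = iter t s2 x /\ P (iter t s1 x).
Proof.
move=> hs; elim=> [|n IH] x; first by left.
case: (IH x) => [e|[t [m [-> [e hP]]]]]; last first.
  by right; exists t, m.+1; rewrite addSn.
case: (boolP (P (iter n s1 x))) => hP.
  by right; exists n, 0%N.
by left; rewrite /= -e hs.
Qed.

Lemma alloc_cat_in (N V : finType) (h r : hist N V) a :
  a \in agents_of h -> alloc_of (h ++ r) a = alloc_of h a.
Proof.
rewrite /alloc_of filter_cat map_cat => ha.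
case E: [seq e.1.2 | e <- h & e.1.1 == a] => [|x s] //.
move: ha => /mapP [e he ea].
have : e.1.2 \in [seq e.1.2 | e <- h & e.1.1 == a] by apply: map_f; rewrite mem_filter -ea eqxx.
by rewrite E.
Qed.

Lemma alloc_cat_notin (N V : finType) (h r : hist N V) a :
  a \notin agents_of h -> alloc_of (h ++ r) a = alloc_of r a.
Proof.
rewrite /alloc_of filter_cat map_cat => ha.
suff -> : [seq e <- h | e.1.1 == a] = [::] by [].
apply/eqP; rewrite -(negbK (_ == _)) -has_filter; apply/negP => /hasP [e he /eqP ea].
by move: ha; rewrite -ea (map_f (fun e => e.1.1) he).
Qed.

Lemma alloc_mem (N V : finType) (r : hist N V) a q :
  alloc_of r a = Some q -> q \in plots_of r.
Proof.
rewrite /alloc_of; case E: [seq e.1.2 | e <- r & e.1.1 == a] => [|x s] //= [<-].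
have : x \in [seq e.1.2 | e <- r & e.1.1 == a] by rewrite E inE eqxx.
move=> /mapP [e]; rewrite mem_filter => /andP [_ he] ->; exact: map_f.
Qed.

Lemma alloc_cons (N V : finType) (e : event N V) (r : hist N V) :
  alloc_of (e :: r) e.1.1 = Some e.1.2.
Proof. by rewrite /alloc_of /= eqxx. Qed.

Lemma alloc_cons_ne (N V : finType) (e : event N V) (r : hist N V) a :
  e.1.1 != a -> alloc_of (e :: r) a = alloc_of r a.
Proof. by rewrite /alloc_of /= => /negPf ->. Qed.

Local Open Scope ring_scope.

Theorem theorem4p6 (N V : finType) (E : rel V) (u : N -> V -> rat)
  (F : rel N) (phi : N -> N -> rat)
  (hNV : #|V| = #|N|) (hE : symmetric E)
  (hu : forall a p, 0 <= u a p <= 1)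
  (hFrec : forall a b, F a b = F b a) (hFirr : irreflexive F)
  (hphi0 : forall a b, 0 <= phi a b)
  (hphimin : forall a b, F a b -> 1 < phi a b)
  (hdeg : forall a, (#|[set b | F a b]| <= 1)%N)
  (c : nat -> {set N} -> N) (hc : forall k S, S != set0 -> c k S \in S)
  (pick : N -> hist N V -> V)
  (hpick : forall a h p, p \notin plots_of h -> pick a h \notin plots_of h)
  (decl : N -> hist N V -> V -> option N)
  (i : N)
  (hrat : forall j, F i j -> forall (h : hist N V) q, q \notin plots_of h ->
            myopic u F phi E j h q <= myopic u F phi E j h (pick j h))
  (dev : hist N V -> V -> option N) :
  U u F phi E (alloc_of (on_ct_rsd c pick (fun a => if a == i then dev else decl a))) i
  <= U u F phi E (alloc_of (on_ct_rsd c pick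
                   (fun a => if a == i then truthful_decl F i else decl a))) i.
Proof.
set D1 := fun a => if a == i then dev else decl a.
set D2 := fun a => if a == i then truthful_decl F i else decl a.
have deg : forall a b b', F a b -> F a b' -> b = b'.
  move=> a b b' h1 h2; apply: (card_le1_eqP (hdeg a)); by rewrite inE.
set x : hist N V * option N * nat := ([::], None, 0%N).
have inv1 := inv_iter hNV hc hpick D1 #|N| (st:=x) isT.
rewrite /on_ct_rsd -/x.
set s1 := ct_step c pick D1 in inv1 *.
set s2 := ct_step c pick D2.
pose P (z : hist N V * option N * nat) :=
  (remaining z.1.1 != set0) && (z.1.2 == None) && (c z.2 (remaining z.1.1) == i).
have hs : forall z, ~~ P z -> s1 z = s2 z.
  case=> [[h pend] k]; rewrite /P /s1 /s2 /ct_step /=; case: ifP => //= R0.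
  case: pend => [a|] //=; rewrite /D1 /D2 => /negPf -> //.
have pre1 : forall m st, exists r, (iter m s1 st).1.1 = st.1.1 ++ r := iter_prefix c pick D1.
have pre2 : forall m st, exists r, (iter m s2 st).1.1 = st.1.1 ++ r := iter_prefix c pick D2.
have hsz : forall t, remaining (iter t s1 x).1.1 != set0 -> size (iter t s1 x).1.1 = t.
  by move=> t; apply: (@iter_size N V c pick D1 t x (erefl x)).
have hinvy : forall t, inv (iter t s1 x) := fun t => inv_iter hNV hc hpick D1 t (st:=x) isT.
have E1 : forall h k, remaining h != set0 -> c k (remaining h) = i ->
   s1 (h, None, k) = (rcons h (i, pick i h,
        match dev h (pick i h) with
           | Some b => if (b \in remaining h) && (b != i) then Some b else None
           | None => None end), match dev h (pick i h) with
           | Some b => if (b \in remaining h) && (b != i) then Some b else None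
           | None => None end, k.+1).
  by move=> h k R0 ci; rewrite /s1 /ct_step (negPf R0) ci /D1 eqxx.
have E2 : forall h k, remaining h != set0 -> c k (remaining h) = i ->
   s2 (h, None, k) = (rcons h (i, pick i h,
        match truthful_decl F i h (pick i h) with
           | Some b => if (b \in remaining h) && (b != i) then Some b else None
           | None => None end), match truthful_decl F i h (pick i h) with
           | Some b => if (b \in remaining h) && (b != i) then Some b else None
           | None => None end, k.+1).
  by move=> h k R0 ci; rewrite /s2 /ct_step (negPf R0) ci /D2 eqxx.
have E3 : forall h b k, b \in remaining h ->
   s2 (h, Some b, k) = (rcons h (b, pick b h, None), None, k).
  move=> h b k bR; rewrite /s2 /ct_step; case: ifP => // /eqP R0.
  by move: bR; rewrite R0 inE.
case: (iter_split hs #|N| x) => [-> //|[t [m [hn [e hP]]]]].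
clearbody s1 s2.
move: inv1 (hsz t) (hinvy t); rewrite hn !iterD !iterS -e.
move: hP; case: (iter t s1 x) => [[h pend] k].
rewrite /P /= => /andP [/andP [R0 /eqP ->] /eqP ci] inv1 /(_ R0) hsz' /and3P [ua up _].
rewrite E1 // E2 // in inv1 *.
set p := pick i h in inv1 *.
set d1 := match dev h p with | Some b => _ | None => _ end in inv1 *.
set d2 := match truthful_decl F i h p with | Some b => _ | None => _ end in inv1 *.
have iR : i \in remaining h by rewrite -ci; apply: hc.
have iA : i \notin agents_of h by move: iR; rewrite inE.
have [r1 Er1] := pre1 m (rcons h (i, p, d1), d1, k.+1).
have [r2 Er2] := pre2 m (rcons h (i, p, d2), d2, k.+1).
rewrite /= in Er1 Er2.
rewrite Er1 in inv1 *; rewrite Er2.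
have A1 : alloc_of (rcons h (i, p, d1) ++ r1) i = Some p.
  by rewrite -cats1 -catA alloc_cat_notin //= alloc_cons.
have A2 : alloc_of (rcons h (i, p, d2) ++ r2) i = Some p.
  by rewrite -cats1 -catA alloc_cat_notin //= alloc_cons.
rewrite /U A1 A2 lerD2l; apply: ler_sum => j Fij; apply: ler_wpM2l; first exact: hphi0.
have ji : j != i by apply/eqP => ji; move: Fij; rewrite ji hFirr.
case: (boolP (j \in agents_of h)) => jA.
  by rewrite -!cats1 -!catA !alloc_cat_in.
have jR : j \in remaining h by rewrite inE.
have td : truthful_decl F i h p = Some j.
  rewrite /truthful_decl; case: pickP => [j' /andP [Fij' _]|/(_ j)].
    by rewrite (deg _ _ _ Fij' Fij).
  by rewrite Fij jA.
have ed2 : d2 = Some j by rewrite /d2 td jR ji.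
have m0 : (0 < m)%N.
  have : (size (i :: j :: agents_of h) <= #|N|)%N.
    rewrite cardE; apply: uniq_leq_size.
      by rewrite /= inE negb_or jA iA ua eq_sym ji.
    by move=> z _; rewrite mem_enum.
  rewrite /= /agents_of size_map hsz' hn; lia.
have Fji : F j i by rewrite hFrec.
have jR' : j \in remaining (rcons h (i, p, Some j)).
  by rewrite inE /agents_of map_rcons mem_rcons inE negb_or ji.
have [m' hm'] : exists m', m = m'.+1 by exists m.-1; lia.
set q2 := pick j (rcons h (i, p, Some j)).
have [r2' Er2'] := pre2 m' (rcons (rcons h (i, p, Some j)) (j, q2, None), None, k.+1).
have hf2 : rcons h (i, p, d2) ++ r2 = rcons h (i, p, Some j) ++ (j, q2, None) :: r2'.
  rewrite -Er2 -cat_rcons -Er2' ed2 hm' iterSr E3 //.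
rewrite hf2.
have A2j : alloc_of (rcons h (i, p, Some j) ++ (j, q2, None) :: r2') j = Some q2.
  rewrite -cats1 -catA alloc_cat_notin // cat_cons alloc_cons_ne ?cat0s ?alloc_cons //.
  by rewrite /= eq_sym.
rewrite A2j.
case: (boolP (E p q2)) => Epq2.
  by case: (alloc_of _ j) => [q|]; rewrite ?ler_nat ?leq_b1.
case Aq: (alloc_of _ j) => [q1|] //.
case: (boolP (E p q1)) => // Epq1; exfalso.
move: Aq; rewrite -cats1 -catA alloc_cat_notin // cat_cons alloc_cons_ne; last by rewrite /= eq_sym.
rewrite cat0s => /alloc_mem q1r1.
move: inv1; rewrite /inv Er1 => /and3P [_ up1 _].
have q1n : q1 \notin plots_of (rcons h (i, p, Some j)).
  move: up1; rewrite /plots_of map_cat cat_uniq => /and3P [_ hh _].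
  apply/negP => hq; move/negP: hh; apply; apply/hasP; exists q1 => //.
  by move: hq; rewrite !map_rcons.
have hr := hrat j Fij _ _ q1n.
have my : forall q, myopic u F phi E j (rcons h (i, p, Some j)) q = u j q + phi j i * (E q p)%:R.
  move=> q; rewrite /myopic big_rcons /= Fji big1_seq ?add0r //.
  move=> ev /andP [Fje evh]; exfalso.
  have ei := deg _ _ _ Fje Fji.
  by move: iA; rewrite -ei (map_f (fun e => e.1.1) evh).
rewrite !my -/q2 (hE q1 p) Epq1 (hE q2 p) (negPf Epq2) mulr1 mulr0 addr0 in hr.
have := hu j q1; have := hu j q2; have := hphimin j i Fji.
move: hr; lra.
Qed.
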